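(* Let $U,M_1,M_2$ be as below, let $M_3$ be as below, set $M_4=M_1U$, $M_5=M_2U$, and let $G'_E$ be the semigroup generated by $M_1,\dots,M_5$, where $$U=\begin{bmatrix}-1&1&0\\0&1&0\\0&0&1\end{bmatrix},\ M_1=\begin{bmatrix}3&-4&4\\7&-7&8\\6&-6&7\end{bmatrix},\ M_2=\begin{bmatrix}-4&3&4\\-7&7&8\\-6&6&7\end{bmatrix},\ M_3=\begin{bmatrix}1&3&4\\0&7&8\\0&6&7\end{bmatrix}.$$ For $M\in G'_E$ and an associated pair $\langle a,b,c\rangle\in\mathfrak{P}_E$, define $M\langle a,b,c\rangle$ to be the associated pair containing the triple $M(a,b,c)_u$, where $(a,b,c)_u$ is the upper triple of $\langle a,b,c\rangle$ and $M(a,b,c)_u$ is the matrix product with the column vector. Then this defines an action of $G'_E$ on $\mathfrak{P}_E$.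
   Context: An Eisenstein triple is a triple $(a,b,c)\in\mathbb{Z}^3_{\ge0}\setminus\{(0,0,0)\}$ with $a^2-ab+b^2=c^2$; it is primitive if $a\le b$ and $\gcd(a,b,c)=1$. For a primitive Eisenstein triple $(a,b,c)$, $(b-a,b,c)$ is also one; the unordered pair of these two triples is the associated pair $\langle a,b,c\rangle$, and $\mathfrak{P}_E$ is the set of all associated pairs. In an associated pair, the triple with $b>2a$ is called the upper triple, denoted $(a,b,c)_u$. *)

(* Defs.v *)
From HB Require Import structures.
From mathcomp Require Import all_boot all_order all_algebra.
From mathcomp Require Import finmap.
Set Implicit Arguments. Unset Strict Implicit. Unset Printing Implicit Defensive.
Import Order.TTheory GRing.Theory Num.Theory.
Local Open Scope ring_scope.


Definition trip := 'cV[int]_3.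
Definition i0 : 'I_3 := @Ordinal 3 0 isT.
Definition i1 : 'I_3 := @Ordinal 3 1 isT.
Definition i2 : 'I_3 := @Ordinal 3 2 isT.
Definition ta (t : trip) : int := t i0 ord0.
Definition tb (t : trip) : int := t i1 ord0.
Definition tc (t : trip) : int := t i2 ord0.
Definition mktrip (a b c : int) : trip :=
  \col_i (if i == i0 then a else if i == i1 then b else c).

Definition eisenstein (t : trip) : Prop :=
  [/\ 0 <= ta t, 0 <= tb t, 0 <= tc t,
      ~ (ta t = 0 /\ tb t = 0 /\ tc t = 0) &
      ta t ^+ 2 - ta t * tb t + tb t ^+ 2 = tc t ^+ 2].

Definition primitive (t : trip) : Prop :=
  [/\ eisenstein t, ta t <= tb t & gcdz (ta t) (gcdz (tb t) (tc t)) = 1].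

Definition partner (t : trip) : trip := mktrip (tb t - ta t) (tb t) (tc t).

Definition assoc_pair (t : trip) : {fset trip} := [fset t; partner t]%fset.

Definition PE (S : {fset trip}) : Prop :=
  exists t, primitive t /\ S = assoc_pair t.

Definition upper (S : {fset trip}) (u : trip) : Prop :=
  u \in S /\ 2 * ta u < tb u.

Definition mx3 (a11 a12 a13 a21 a22 a23 a31 a32 a33 : int) : 'M[int]_3 :=
  \matrix_(i < 3, j < 3)
    nth 0 (nth [::] [:: [:: a11; a12; a13]; [:: a21; a22; a23];
                        [:: a31; a32; a33]] i) j.

Definition Umx : 'M[int]_3 := mx3 (-1) 1 0  0 1 0  0 0 1.
Definition M1 : 'M[int]_3 := mx3 3 (-4) 4  7 (-7) 8  6 (-6) 7.
Definition M2 : 'M[int]_3 := mx3 (-4) 3 4  (-7) 7 8  (-6) 6 7.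
Definition M3 : 'M[int]_3 := mx3 1 3 4  0 7 8  0 6 7.
Definition M4 : 'M[int]_3 := M1 *m Umx.
Definition M5 : 'M[int]_3 := M2 *m Umx.

Inductive GE' : 'M[int]_3 -> Prop :=
| GE'_1 : GE' M1
| GE'_2 : GE' M2
| GE'_3 : GE' M3
| GE'_4 : GE' M4
| GE'_5 : GE' M5
| GE'_mul M N : GE' M -> GE' N -> GE' (M *m N).

Definition actR (M : 'M[int]_3) (S S' : {fset trip}) : Prop :=
  PE S' /\ exists u, upper S u /\ M *m u \in S'.

(* Main.v *)
Require Import Defs.
From HB Require Import structures.
From mathcomp Require Import all_boot all_order all_algebra zify ring.
From mathcomp Require Import finmap.
Import Order.TTheory GRing.Theory Num.Theory.
Set Implicit Arguments.
Local Open Scope ring_scope.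

Lemma mulE (M : 'M[int]_3) (t : trip) i :
  (M *m t) i ord0 = M i i0 * ta t + M i i1 * tb t + M i i2 * tc t.
Proof.
rewrite mxE !big_ord_recl big_ord0 addr0 addrA.
have -> : lift ord0 (lift ord0 ord0) = i2 :> 'I_3 by apply/val_inj.
have -> : lift ord0 ord0 = i1 :> 'I_3 by apply/val_inj.
have -> : ord0 = i0 :> 'I_3 by apply/val_inj.
by [].
Qed.

Lemma M1E t : [/\ ta (M1 *m t) = 3 * ta t + (-4) * tb t + 4 * tc t,
  tb (M1 *m t) = 7 * ta t + (-7) * tb t + 8 * tc t &
  tc (M1 *m t) = 6 * ta t + (-6) * tb t + 7 * tc t].
Proof. by split; rewrite /ta /tb /tc mulE /M1 /mx3 !mxE. Qed.

Lemma gcd_tr (a b c a' b' c' p1 q1 r1 p2 q2 r2 p3 q3 r3 : int) :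
  a = p1 * a' + q1 * b' + r1 * c' ->
  b = p2 * a' + q2 * b' + r2 * c' ->
  c = p3 * a' + q3 * b' + r3 * c' ->
  gcdz a (gcdz b c) = 1 -> gcdz a' (gcdz b' c') = 1.
Proof.
move=> Ha Hb Hc H.
set g := gcdz a' (gcdz b' c').
have ga : (g %| a')%Z by apply: dvdz_gcdl.
have g2 : (g %| gcdz b' c')%Z by apply: dvdz_gcdr.
move: g2; rewrite dvdz_gcd => /andP [gb gc].
case/dvdzP: ga => x hx; case/dvdzP: gb => y hy; case/dvdzP: gc => z hz.
have : (g %| gcdz a (gcdz b c))%Z.
  rewrite !dvdz_gcd; apply/and3P; split; apply/dvdzP.
  - by exists (p1 * x + q1 * y + r1 * z); rewrite Ha hx hy hz; ring.
  - by exists (p2 * x + q2 * y + r2 * z); rewrite Hb hx hy hz; ring.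
  - by exists (p3 * x + q3 * y + r3 * z); rewrite Hc hx hy hz; ring.
by rewrite H dvdz1 /g /gcdz /= => /eqP ->.
Qed.


Lemma M2E t : [/\ ta (M2 *m t) = (-4) * ta t + 3 * tb t + 4 * tc t,
  tb (M2 *m t) = (-7) * ta t + 7 * tb t + 8 * tc t &
  tc (M2 *m t) = (-6) * ta t + 6 * tb t + 7 * tc t].
Proof. by split; rewrite /ta /tb /tc mulE /M2 /mx3 !mxE. Qed.

Lemma M3E t : [/\ ta (M3 *m t) = 1 * ta t + 3 * tb t + 4 * tc t,
  tb (M3 *m t) = 0 * ta t + 7 * tb t + 8 * tc t &
  tc (M3 *m t) = 0 * ta t + 6 * tb t + 7 * tc t].
Proof. by split; rewrite /ta /tb /tc mulE /M3 /mx3 !mxE. Qed.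

Lemma UE t : [/\ ta (Umx *m t) = (-1) * ta t + 1 * tb t + 0 * tc t,
  tb (Umx *m t) = 0 * ta t + 1 * tb t + 0 * tc t &
  tc (Umx *m t) = 0 * ta t + 0 * tb t + 1 * tc t].
Proof. by split; rewrite /ta /tb /tc mulE /Umx /mx3 !mxE. Qed.

Definition PU (t : trip) : Prop :=
  [/\ 0 <= ta t, 2 * ta t < tb t, 0 <= tc t,
      ta t ^+ 2 - ta t * tb t + tb t ^+ 2 = tc t ^+ 2 &
      gcdz (ta t) (gcdz (tb t) (tc t)) = 1].

Lemma PU_M1 t : PU t -> PU (M1 *m t).
Proof.
rewrite /PU.
case: (M1E t) => -> -> ->.
case=> ha hab hc hq hg.
set a := ta t in ha hab hc hq hg *; set b := tb t in ha hab hc hq hg *; set c := tc t in ha hab hc hq hg *.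
have h1 : b - a <= c by move: hq; rewrite !expr2; nia.
have h2 : 4 * b - 3 * a <= 4 * c by move: hq; rewrite !expr2; nia.
have h3 : 3 * a + b <= 4 * c by move: hq; rewrite !expr2; nia.
split; [lia | lia | lia | by move: hq; rewrite !expr2 => hq; nia |
    apply: (@gcd_tr _ _ _ _ _ _ (-1) 4 (-4) (-1) (-3) 4 0 (-6) 7 _ _ _ hg); ring].
Qed.

Lemma PU_M2 t : PU t -> PU (M2 *m t).
Proof.
rewrite /PU.
case: (M2E t) => -> -> ->.
case=> ha hab hc hq hg.
set a := ta t in ha hab hc hq hg *; set b := tb t in ha hab hc hq hg *; set c := tc t in ha hab hc hq hg *.
have h1 : b - a <= c by move: hq; rewrite !expr2; nia.
have h2 : 4 * b - 3 * a <= 4 * c by move: hq; rewrite !expr2; nia.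
have h3 : 3 * a + b <= 4 * c by move: hq; rewrite !expr2; nia.
split; [lia | lia | lia | by move: hq; rewrite !expr2 => hq; nia |
    apply: (@gcd_tr _ _ _ _ _ _ (-1) (-3) 4 (-1) 4 (-4) 0 (-6) 7 _ _ _ hg); ring].
Qed.

Lemma PU_M3 t : PU t -> PU (M3 *m t).
Proof.
rewrite /PU.
case: (M3E t) => -> -> ->.
case=> ha hab hc hq hg.
set a := ta t in ha hab hc hq hg *; set b := tb t in ha hab hc hq hg *; set c := tc t in ha hab hc hq hg *.
have h1 : b - a <= c by move: hq; rewrite !expr2; nia.
have h2 : 4 * b - 3 * a <= 4 * c by move: hq; rewrite !expr2; nia.
have h3 : 3 * a + b <= 4 * c by move: hq; rewrite !expr2; nia.
split; [lia | lia | lia | by move: hq; rewrite !expr2 => hq; nia |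
    apply: (@gcd_tr _ _ _ _ _ _ 1 3 (-4) 0 7 (-8) 0 (-6) 7 _ _ _ hg); ring].
Qed.

Lemma PU_M4 t : PU t -> PU (M4 *m t).
Proof.
rewrite /PU /M4 -mulmxA; case: (M1E (Umx *m t)) => -> -> ->; case: (UE t) => -> -> ->.
case=> ha hab hc hq hg.
set a := ta t in ha hab hc hq hg *; set b := tb t in ha hab hc hq hg *; set c := tc t in ha hab hc hq hg *.
have h1 : b - a <= c by move: hq; rewrite !expr2; nia.
have h2 : 4 * b - 3 * a <= 4 * c by move: hq; rewrite !expr2; nia.
have h3 : 3 * a + b <= 4 * c by move: hq; rewrite !expr2; nia.
split; [lia | lia | lia | by move: hq; rewrite !expr2 => hq; nia |
    apply: (@gcd_tr _ _ _ _ _ _ 0 (-7) 8 (-1) (-3) 4 0 (-6) 7 _ _ _ hg); ring].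
Qed.

Lemma PU_M5 t : PU t -> PU (M5 *m t).
Proof.
rewrite /PU /M5 -mulmxA; case: (M2E (Umx *m t)) => -> -> ->; case: (UE t) => -> -> ->.
case=> ha hab hc hq hg.
set a := ta t in ha hab hc hq hg *; set b := tb t in ha hab hc hq hg *; set c := tc t in ha hab hc hq hg *.
have h1 : b - a <= c by move: hq; rewrite !expr2; nia.
have h2 : 4 * b - 3 * a <= 4 * c by move: hq; rewrite !expr2; nia.
have h3 : 3 * a + b <= 4 * c by move: hq; rewrite !expr2; nia.
split; [lia | lia | lia | by move: hq; rewrite !expr2 => hq; nia |
    apply: (@gcd_tr _ _ _ _ _ _ 0 7 (-8) (-1) 4 (-4) 0 (-6) 7 _ _ _ hg); ring].
Qed.

Lemma GE_PU M : GE' M -> forall t, PU t -> PU (M *m t).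
Proof.
elim=> [|||||M1 N _ IHM _ IHN] t ht.
- exact: PU_M1.
- exact: PU_M2.
- exact: PU_M3.
- exact: PU_M4.
- exact: PU_M5.
- by rewrite -mulmxA; apply: IHM; apply: IHN.
Qed.

Lemma tmk a b c : [/\ ta (mktrip a b c) = a, tb (mktrip a b c) = b & tc (mktrip a b c) = c].
Proof. by split; rewrite /ta /tb /tc mxE. Qed.

Lemma trip_eq (s t : trip) : ta s = ta t -> tb s = tb t -> tc s = tc t -> s = t.
Proof.
move=> ha hb hc; apply/matrixP => i j; rewrite (ord1 j).
have : i = i0 \/ i = i1 \/ i = i2.
  by case: i => [[|[|[|k]]] Hi] //; [left|right;left|right;right]; apply/val_inj.
by case=> [->|[->|->]].
Qed.

Lemma partnerE t : [/\ ta (partner t) = tb t - ta t, tb (partner t) = tb t & tc (partner t) = tc t].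
Proof. by rewrite /partner; case: (tmk (tb t - ta t) (tb t) (tc t)). Qed.

Lemma partnerK t : partner (partner t) = t.
Proof.
case: (partnerE (partner t)) => h1 h2 h3; case: (partnerE t) => g1 g2 g3.
apply: trip_eq; rewrite ?h1 ?h2 ?h3 ?g1 ?g2 ?g3 //; ring.
Qed.

Lemma mod3 (x : int) : exists q r, x = 3 * q + r /\ 0 <= r < 3.
Proof.
exists (x %/ 3)%Z, (x %% 3)%Z; split.
  by rewrite {1}(divz_eq x 3) mulrC.
by rewrite modz_ge0 //= ltz_pmod.
Qed.

Lemma noteq t : primitive t -> tb t <> 2 * ta t.
Proof.
case=> [[ha hb hc hnz hq] hab hg] e.
rewrite e in hq hg hb hnz.
have hq' : 3 * (ta t * ta t) = tc t * tc t by move: hq; rewrite !expr2 => hq; nia.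
have [p [s [hp hs]]] := mod3 (ta t).
have [q [r [hqq hr]]] := mod3 (tc t).
have r0 : r = 0.
  rewrite hp hqq in hq'; move: hr hs => /andP [] r1 r2 /andP [] s1 s2.
  have : r = 0 \/ r = 1 \/ r = 2 by lia.
  case=> [//|[] er]; rewrite er in hq'; exfalso; nia.
have s0 : s = 0.
  rewrite hp hqq r0 in hq'; move: hs => /andP [] s1 s2.
  have : s = 0 \/ s = 1 \/ s = 2 by lia.
  case=> [//|[] er]; rewrite er in hq'; exfalso; nia.
have : (3 %| gcdz (ta t) (gcdz (2 * ta t) (tc t)))%Z.
  rewrite !dvdz_gcd hp hqq r0 s0 !addr0; apply/and3P; split.
  - by apply/dvdz_mulr; apply: dvdzz.
  - by apply/dvdz_mull; apply/dvdz_mulr; apply: dvdzz.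
  - by apply/dvdz_mulr; apply: dvdzz.
by rewrite hg.
Qed.

Lemma in_pair u t : u \in assoc_pair t -> u = t \/ u = partner t.
Proof. by rewrite /assoc_pair in_fset2 => /orP [] /eqP ->; [left|right]. Qed.

Lemma upper_uniq S u v : PE S -> upper S u -> upper S v -> u = v.
Proof.
case=> t [pt ->] [hu hu'] [hv hv'].
case: (partnerE t) => e1 e2 e3.
case/in_pair: hu => -> in hu' *; case/in_pair: hv => -> in hv' * => //;
  rewrite ?e1 ?e2 in hu' hv'; exfalso; lia.
Qed.

Lemma PU_prim t : PU t -> primitive t.
Proof.
case=> ha hab hc hq hg; split => //; last by lia.
split => //; first by lia.
by case=> h1 [h2 h3]; lia.
Qed.

Lemma upper_PU S u : PE S -> upper S u -> PU u.
Proof.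
case=> t [[[ha hb hc hnz hq] hab hg] ->] [hu hu'].
case/in_pair: hu => -> in hu' *; first by split.
case: (partnerE t) => e1 e2 e3; rewrite e1 e2 in hu'; rewrite /PU e1 e2 e3; split => //.
- by lia.
- by move: hq; rewrite !expr2 => hq; nia.
- by apply: (@gcd_tr _ _ _ _ _ _ (-1) 1 0 0 1 0 0 0 1 _ _ _ hg); ring.
Qed.

Lemma upper_ex S : PE S -> exists u, upper S u.
Proof.
move=> PS; case: (PS) => t [pt eS].
have ne := noteq pt.
case: (partnerE t) => e1 e2 e3.
case: (ltrP (2 * ta t) (tb t)) => h.
- by exists t; split => //; rewrite eS /assoc_pair in_fset2 eqxx.
- exists (partner t); split; first by rewrite eS /assoc_pair in_fset2 eqxx orbT.
  rewrite e1 e2; lia.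
Qed.

Theorem lemma6p3 :
  (* the upper triple of an associated pair is well defined *)
  (forall S, PE S -> exists! u, upper S u) /\
  (* M<a,b,c> is a well-defined element of P_E *)
  (forall M S, GE' M -> PE S -> exists! S', actR M S S') /\
  (* compatibility with the semigroup law: (MN)<S> = M<N<S>> *)
  (forall M N S S1 S2, GE' M -> GE' N -> PE S ->
     actR N S S1 -> actR M S1 S2 -> actR (M *m N) S S2).
Proof.
split; [|split].
- move=> S PS; case: (upper_ex PS) => u hu; exists u; split => // v hv.
  exact: upper_uniq PS hu hv.
- move=> M S gM PS; case: (upper_ex PS) => u hu.
  have pu := upper_PU PS hu.
  have pmu := GE_PU gM pu.
  exists (assoc_pair (M *m u)); split.
    split; first by exists (M *m u); split => //; apply: PU_prim.
    by exists u; split => //; rewrite /assoc_pair in_fset2 eqxx.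
  move=> S' [[t' [pt' ->]] [u' [hu' hin]]].
  have eu := upper_uniq PS hu hu'; subst u'.
  case/in_pair: hin => e; rewrite e //.
  rewrite /assoc_pair partnerK; apply/fsetP => x; rewrite !in_fset2 orbC.
  by [].
- move=> M N S S1 S2 gM gN PS [PS1 [u [hu hin]]] [PS2 [u1 [hu1 hin1]]].
  split => //; exists u; split => //.
  have pnu := GE_PU gN (upper_PU PS hu).
  have hup : upper S1 (N *m u) by split => //; case: pnu.
  have e := upper_uniq PS1 hu1 hup; subst u1.
  by rewrite -mulmxA.
Qed.
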